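(* Let $M \neq \{0\}$ be a semiideal of $\mathbb{N}_0$ and let $d$ be the period of $M$. If $a, b \in M$, $a \neq 0$, and $a + d = b$, then $d$ divides $a$.
   Context: $\mathbb{N}_0$ is the semiring of natural numbers including $0$. A semiideal of $\mathbb{N}_0$ is a nonempty subset closed under addition and multiplication by elements of $\mathbb{N}_0$. For a semiideal $M\neq 0$, an element $e \in \mathbb{N}=\mathbb{N}_0\setminus\{0\}$ is a difference of $M$ if there are $x,y\in M$, $x\neq 0$, with $x+e=y$; the period of $M$ is the minimal difference. *)

(* Defs.v *)
From mathcomp Require Import all_boot.
Set Implicit Arguments. Unset Strict Implicit. Unset Printing Implicit Defensive.

Definition semiideal (M : nat -> Prop) : Prop :=
  (exists x, M x) /\
  (forall x y, M x -> M y -> M (x + y)) /\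
  (forall c x, M x -> M (c * x)).

Definition is_difference (M : nat -> Prop) (e : nat) : Prop :=
  0 < e /\ exists x y, M x /\ M y /\ x <> 0 /\ x + e = y.

Definition is_period (M : nat -> Prop) (d : nat) : Prop :=
  is_difference M d /\ forall e, is_difference M e -> d <= e.

(* Main.v *)
Require Import Defs.
From mathcomp Require Import all_boot.
From mathcomp Require Import zify.

Theorem lemma4p3 (M : nat -> Prop) (d a b : nat) :
  semiideal M ->
  ~ (forall x, M x <-> x = 0) ->
  is_period M d ->
  M a -> M b -> a <> 0 -> a + d = b ->
  d %| a.
Proof.
move=> [_ [Hadd Hmul]] _ [[d0 _] Hmin] Ma Mb a0 ab.
rewrite /dvdn.
apply/eqP; case: (posnP (a %% d)) => // r0.
have Hx : M (a + (a %/ d) * b) by apply: Hadd => //; apply: Hmul.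
have Hy : M ((a %/ d).+2 * a) by apply: Hmul.
suff : d <= a %% d by rewrite leqNgt ltn_mod d0.
apply: Hmin; split=> //; exists (a + (a %/ d) * b), ((a %/ d).+2 * a); do 3 (split => //).
  by move=> /eqP; rewrite addn_eq0 => /andP[/eqP].
have E := divn_eq a d. rewrite -ab. set q := a %/ d in E *. set r := a %% d in E *. rewrite {2 3}E. nia.
Qed.
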